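(* Let $\beta\in\mathbb{D}$ and $p\in\mathbb{D}$, and let $s=\beta+\bar\beta p$ (so that $(s,p)\in\mathbb{G}$). Then $$\kappa(s,p):=\sup_{z\in\mathbb{D}}\frac{1-|z|^2}{|1-sz+pz^2|}=\left|1-\frac{\tfrac12 s\bar\beta}{1+\sqrt{1-|\beta|^2}}\right|^{-1},$$ and the supremum is attained at exactly one point of $\mathbb{D}$, namely $z=\dfrac{\bar\beta}{1+\sqrt{1-|\beta|^2}}$.
   Context: $\mathbb{D}$ is the open unit disc and $\mathbb{G}=\{(z+w,zw):|z|<1,|w|<1\}$ is the symmetrised bidisc. (For $(s,p)\in\mathbb{G}$ one has $\beta=(s-\bar s p)/(1-|p|^2)$.) *)

(* Defs.v *)
(* Complex numbers: an arbitrary numClosedFieldType C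
   (e.g. algC; the statement is algebraic/first-order). *)
From HB Require Import structures.
From mathcomp Require Import all_boot all_order all_algebra.
Set Implicit Arguments. Unset Strict Implicit. Unset Printing Implicit Defensive.
Import Order.TTheory GRing.Theory Num.Theory.
Local Open Scope ring_scope.

Definition disc (C : numClosedFieldType) (z : C) : Prop := `|z| < 1.

Definition kfun (C : numClosedFieldType) (s p z : C) : C :=
  (1 - `|z| ^+ 2) / `|1 - s * z + p * z ^+ 2|.

Definition is_sup_on (C : numClosedFieldType) (P : C -> Prop) (f : C -> C) (v : C) : Prop :=
  (forall z, P z -> f z <= v) /\
  (forall w, (forall z, P z -> f z <= w) -> v <= w).

(* Main.v *)
Require Import Defs.
From HB Require Import structures.
From mathcomp Require Import all_boot all_order all_algebra.
From mathcomp Require Import ring.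
Import Order.TTheory GRing.Theory Num.Theory.
Local Open Scope ring_scope.

Lemma F2aux (C : numClosedFieldType) (x y r : C) : 1 + r != 0 ->
  x * (2%:R * r * (1 + r) * (1 - y ^+ 2)) =
  4%:R * r * (1 + r) ^+ 2 * (x / (2%:R * (1 + r)) * (1 - y ^+ 2)).
Proof. by move=> h; field. Qed.

Theorem proposition4p2 (C : numClosedFieldType) (beta p : C)
    (hbeta : `|beta| < 1) (hp : `|p| < 1) :
  let s := beta + beta^* * p in
  let v := `|1 - (s * beta^* / 2%:R) / (1 + sqrtC (1 - `|beta| ^+ 2))| ^-1 in
  let z0 := beta^* / (1 + sqrtC (1 - `|beta| ^+ 2)) in
  is_sup_on (@disc C) (kfun s p) v /\
  disc z0 /\ kfun s p z0 = v /\
  (forall z : C, disc z -> kfun s p z = v -> z = z0).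
Proof.
move=> s v z0.
have hb2 : `|beta| ^+ 2 < 1 by rewrite exprn_ilt1.
have hp2 : `|p| ^+ 2 < 1 by rewrite exprn_ilt1.
set r := sqrtC (1 - `|beta| ^+ 2).
have hr0 : 0 < r by rewrite sqrtC_gt0 subr_gt0.
have hr2 : r ^+ 2 = 1 - `|beta| ^+ 2 by rewrite sqrtCK.
have hrc : r^* = r := geC0_conj (ltW hr0).
have hm : beta * beta^* = 1 - r ^+ 2 by rewrite hr2 -normCK; ring.
have hr1 : 0 < 1 + r by rewrite addr_gt0 ?ltr01.
have hr1n : 1 + r != 0 by rewrite gt_eqF.
have h2n : (2%:R : C) != 0 by rewrite pnatr_eq0.
pose c : C := 4%:R * r * (1 + r) ^+ 2.
have hc : 0 < c by rewrite /c !mulr_gt0 ?exprn_gt0 ?ltr0n.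
pose U : C := (1 + r) ^+ 2 - p * beta^* ^+ 2.
pose W : C := p * (1 + r) ^+ 2 - beta ^+ 2.
pose K : C := 1 - (s * beta^* / 2%:R) / (1 + r).
pose V (z : C) : C := 1 + r - beta * z.
pose Y (z : C) : C := (1 + r) * z - beta^*.
pose Q (z : C) : C := 1 - s * z + p * z ^+ 2.
have E1 z : c * Q z = U * V z ^+ 2 + W * Y z ^+ 2.
  have -> : U * V z ^+ 2 + W * Y z ^+ 2 = ((1 + r) ^+ 4 - (beta * beta^*) ^+ 2)
     * (1 + p * z ^+ 2) - 2%:R * (1 + r) * ((1 + r) ^+ 2 - beta * beta^*)
     * (beta + p * beta^*) * z by rewrite /U /V /W /Y; ring.
  by rewrite hm /c /Q /s; ring.
have E2 z : `|V z| ^+ 2 - `|Y z| ^+ 2 = 2%:R * r * (1 + r) * (1 - `|z| ^+ 2).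
  rewrite !normCK /V /Y !(rmorphB, rmorphD, rmorphM, rmorph1) /= hrc conjCK.
  rewrite (_ : _ - _ = ((1 + r) ^+ 2 - beta * beta^*) * (1 - z * z^*)); last by ring.
  by rewrite hm -normCK; ring.
have E3 : `|U| ^+ 2 - `|W| ^+ 2 = (1 - `|p| ^+ 2) * c.
  rewrite !normCK /U /W !(rmorphB, rmorphD, rmorphM, rmorphXn, rmorph1) /= hrc conjCK.
  rewrite (_ : _ - _ = (1 - p * p^*) * ((1 + r) ^+ 4 - (beta * beta^*) ^+ 2)); last by ring.
  by rewrite hm /c; ring.
have hWU : `|W| < `|U|.
  rewrite -(@ltr_pXn2r _ 2) ?nnegrE ?normr_ge0 // -subr_gt0 E3 mulr_gt0 //.
  by rewrite subr_gt0.
have EK : K = U / (2%:R * (1 + r)).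
  rewrite /K /U /s.
  have -> : (1 + r) ^+ 2 - p * beta^* ^+ 2 =
     2%:R * (1 + r) - beta * beta^* - p * beta^* ^+ 2 by rewrite hm; ring.
  by field.
have nK : `|K| = `|U| / (2%:R * (1 + r)).
  by rewrite EK normrM normfV [`|2%:R * _|]ger0_norm // mulr_ge0 ?ler0n ?ltW.
have hU0 : 0 < `|U| by apply: le_lt_trans hWU.
have hK0 : 0 < `|K| by rewrite nK divr_gt0 // mulr_gt0 ?ltr0n.
have F1 z : `|U| * `|V z| ^+ 2 - `|W| * `|Y z| ^+ 2 <= c * `|Q z|.
  have := lerB_normD (U * V z ^+ 2) (W * Y z ^+ 2).
  by rewrite -E1 (normrM U) (normrM W) (normrM c) !normrX (ger0_norm (ltW hc)).
have F2 z : `|U| * (`|V z| ^+ 2 - `|Y z| ^+ 2) = c * (`|K| * (1 - `|z| ^+ 2)).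
  by rewrite E2 nK /c F2aux.
have ineq z : `|z| < 1 -> `|K| * (1 - `|z| ^+ 2) <= `|Q z|.
  move=> hz; rewrite -(ler_pM2l hc) -F2; apply: le_trans (F1 z).
  rewrite mulrBr lerD2l lerN2 ler_wpM2r ?exprn_ge0 ?normr_ge0 //.
  exact: ltW.
have kfQ z : kfun s p z = (1 - `|z| ^+ 2) / `|Q z| by [].
have hv : v = `|K|^-1 by [].
have hv0 : 0 < v by rewrite hv invr_gt0.
have hz0 : `|z0| < 1.
  rewrite /z0 normrM normfV norm_conjC (ger0_norm (ltW hr1)) ltr_pdivrMr //.
  rewrite mul1r; apply: lt_le_trans hbeta _.
  by rewrite lerDl ltW.
have hYz0 : Y z0 = 0 by rewrite /Y /z0 -/r mulrC divfK // subrr.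
have hdz0 : 0 < 1 - `|z0| ^+ 2 by rewrite subr_gt0 exprn_ilt1.
have kz0 : kfun s p z0 = v.
  have eQ : `|Q z0| = `|K| * (1 - `|z0| ^+ 2).
    apply: (@mulfI _ c); first by rewrite gt_eqF.
    have h := congr1 (fun x => `|x|) (E1 z0).
    rewrite /= hYz0 [0 ^+ 2]expr2 mul0r mulr0 addr0 (normrM c) (normrM U) normrX
      (ger0_norm (ltW hc)) in h.
    by rewrite -F2 h hYz0 normr0 [0 ^+ 2]expr2 mul0r subr0.
  rewrite kfQ eQ hv invfM mulrCA mulfV ?mulr1 //; by rewrite gt_eqF.
split; [split|split; [exact: hz0|split; [exact: kz0|]]].
- move=> z hz; rewrite kfQ.
  have [Q0|Q0] := eqVneq (Q z) 0.
    by rewrite Q0 normr0 invr0 mulr0 ltW.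
  have hQ : 0 < `|Q z| by rewrite normr_gt0.
  rewrite ler_pdivrMr // hv -(ler_pM2l hK0) mulrA divff ?gt_eqF // mul1r.
  exact: ineq.
- move=> w hw; rewrite -kz0; exact: hw.
- move=> z hz hkz.
  have [Q0|Q0] := eqVneq (Q z) 0.
    by move: hkz; rewrite kfQ Q0 normr0 invr0 mulr0 => h; move: hv0; rewrite -h ltxx.
  have hQ : 0 < `|Q z| by rewrite normr_gt0.
  have eQ : `|K| * (1 - `|z| ^+ 2) = `|Q z|.
    move: hkz; rewrite kfQ hv => h.
    have -> : 1 - `|z| ^+ 2 = `|K|^-1 * `|Q z| by rewrite -h divfK ?gt_eqF.
    by rewrite mulrA divff ?mul1r ?gt_eqF.
  have hle := F1 z; rewrite -eQ -F2 mulrBr lerD2l lerN2 in hle.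
  have hY : Y z = 0.
    apply/eqP; apply/negPn/negP => hY.
    have hY2 : 0 < `|Y z| ^+ 2 by rewrite exprn_gt0 // normr_gt0.
    by move: hle; rewrite ler_pM2r // => /(lt_le_trans hWU); rewrite ltxx.
  apply: (mulfI hr1n); rewrite /z0 -/r [X in _ = X]mulrC divfK //.
  by apply/eqP; rewrite -subr_eq0; apply/eqP; exact: hY.
Qed.
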